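(* If $\Phi=(\varphi_n)_{n\in\mathbb{N}}$ is a depth-bounded fuzzy bisimulation between fuzzy automata $\mathcal{A}$ and $\mathcal{A}'$, then for every $n\in\mathbb{N}$ and every $\alpha\in\mathcal{F}^n_{\leftrightarrow}$: $\varphi_n^{-1}\circ\alpha^{\mathcal{A}}\le\alpha^{\mathcal{A}'}$ and $\varphi_n\circ\alpha^{\mathcal{A}'}\le\alpha^{\mathcal{A}}$. Consequently $\varphi_n(x,x')\le\bigwedge_{\alpha\in\mathcal{F}^n_{\leftrightarrow}}(\alpha^{\mathcal{A}}(x)\Leftrightarrow\alpha^{\mathcal{A}'}(x'))$ for all $(x,x')\in A\times A'$.
   Context: $\mathcal{L}=\langle L,\le,\otimes,\Rightarrow,0,1\rangle$ is a complete residuated lattice: $\langle L,\le,0,1\rangle$ is a complete lattice with least element $0$ and greatest element $1$, $\langle L,\otimes,1\rangle$ is a commutative monoid, and $x\otimes y\le z$ iff $x\le (y\Rightarrow z)$; $x\Leftrightarrow y=(x\Rightarrow y)\wedge(y\Rightarrow x)$. Fuzzy relations are maps into $L$ ordered pointwise; $\varphi^{-1}(b,a)=\varphi(a,b)$; $(\varphi\circ\psi)(a,c)=\bigvee_b\varphi(a,b)\otimes\psi(b,c)$, $(\varphi\circ g)(a)=\bigvee_b\varphi(a,b)\otimes g(b)$. A fuzzy automaton over $\Sigma$ is $\mathcal{A}=\langle A,\delta^{\mathcal{A}},\sigma^{\mathcal{A}},\tau^{\mathcal{A}}\rangle$ with $A$ nonempty, $\delta^{\mathcal{A}}:A\times\Sigma\times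 A\to L$, $\sigma^{\mathcal{A}},\tau^{\mathcal{A}}:A\to L$; $\delta^{\mathcal{A}}_s(x,y)=\delta^{\mathcal{A}}(x,s,y)$; similarly $\mathcal{A}'$ with states $A'$. The sets $\mathcal{F}^n_{\leftrightarrow}$ are the smallest sets of formulas with: $\tau\in\mathcal{F}^n_{\leftrightarrow}$; $s\in\Sigma,\alpha\in\mathcal{F}^n_{\leftrightarrow}\Rightarrow(s\circ\alpha)\in\mathcal{F}^{n+1}_{\leftrightarrow}$; $a\in L,\alpha\in\mathcal{F}^n_{\leftrightarrow}\Rightarrow(a\leftrightarrow\alpha)\in\mathcal{F}^n_{\leftrightarrow}$; $\alpha,\beta\in\mathcal{F}^n_{\leftrightarrow}\Rightarrow(\alpha\wedge\beta)\in\mathcal{F}^n_{\leftrightarrow}$. Semantics: $\tau^{\mathcal{A}}$ is the terminal fuzzy set; $(s\circ\alpha)^{\mathcal{A}}=\delta^{\mathcal{A}}_s\circ\alpha^{\mathcal{A}}$; $(a\leftrightarrow\alpha)^{\mathcal{A}}(x)=a\Leftrightarrow\alpha^{\mathcal{A}}(x)$; $(\alpha\wedge\beta)^{\mathcal{A}}(x)=\alpha^{\mathcal{A}}(x)\wedge\beta^{\mathcal{A}}(x)$. A depth-bounded fuzzy bisimulation between $\mathcal{A}$ and $\mathcal{A}'$ is a sequence $(\varphi_n)_{n\in\mathbb{N}}$ of fuzzy relations $A\times A'\to L$ with $\varphi_n\le\varphi_{n-1}$ ($n\ge1$), $\varphi_0^{-1}\circ\tau^{\mathcal{A}}\le\tau^{\mathcal{A}'}$,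 $\varphi_0\circ\tau^{\mathcal{A}'}\le\tau^{\mathcal{A}}$, and for all $s\in\Sigma,n\ge1$: $\varphi_n^{-1}\circ\delta^{\mathcal{A}}_s\le\delta^{\mathcal{A}'}_s\circ\varphi_{n-1}^{-1}$ and $\varphi_n\circ\delta^{\mathcal{A}'}_s\le\delta^{\mathcal{A}}_s\circ\varphi_{n-1}$. *)

(* Defs.v *)
Set Implicit Arguments.
Unset Strict Implicit.

(** Complete residuated lattice  <L, <=, (x), =>, 0, 1>.
    Completeness: every subset S (a predicate) has a supremum [sup S];
    infima are derived.  1 is both the top element and the monoid unit. *)
Record CRL := {
  car :> Type;
  le : car -> car -> Prop;
  le_refl : forall x, le x x;
  le_antisym : forall x y, le x y -> le y x -> x = y;
  le_trans : forall x y z, le x y -> le y z -> le x z;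
  sup : (car -> Prop) -> car;
  sup_ub : forall (S : car -> Prop) x, S x -> le x (sup S);
  sup_least : forall (S : car -> Prop) y, (forall x, S x -> le x y) -> le (sup S) y;
  one : car;
  one_top : forall x, le x one;
  mul : car -> car -> car;
  mulA : forall x y z, mul x (mul y z) = mul (mul x y) z;
  mulC : forall x y, mul x y = mul y x;
  mul1x : forall x, mul one x = x;
  res : car -> car -> car;
  adjunction : forall x y z, le (mul x y) z <-> le x (res y z)
}.

Definition inf {L : CRL} (S : L -> Prop) : L := @sup L (fun y => forall x, S x -> @le L y x).
Definition zero (L : CRL) : L := @sup L (fun _ => False).
Definition meet {L : CRL} (x y : L) : L := inf (fun z => z = x \/ z = y).
Definition biimp {L : CRL} (x y : L) : L := meet (@res L x y) (@res L y x).

Definition rel_comp {L : CRL} {X Y Z : Type} (phi : X -> Y -> L) (psi : Y -> Z -> L) : X -> Z -> L :=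
  fun x z => @sup L (fun v => exists y, v = @mul L (phi x y) (psi y z)).
Definition set_comp {L : CRL} {X Y : Type} (phi : X -> Y -> L) (g : Y -> L) : X -> L :=
  fun x => @sup L (fun v => exists y, v = @mul L (phi x y) (g y)).
Definition rel_inv {L : CRL} {X Y : Type} (phi : X -> Y -> L) : Y -> X -> L := fun y x => phi x y.
Definition rel_le {L : CRL} {X Y : Type} (phi psi : X -> Y -> L) : Prop :=
  forall x y, @le L (phi x y) (psi x y).
Definition set_le {L : CRL} {X : Type} (f g : X -> L) : Prop := forall x, @le L (f x) (g x).

Record fuzzy_automaton (L : CRL) (Sigma : Type) := {
  st :> Type;
  st_nonempty : inhabited st;
  delta : st -> Sigma -> st -> L;
  sigma_in : st -> L;
  tau_out : st -> L
}.

Definition delta_s (L : CRL) (Sigma : Type) (A : fuzzy_automaton L Sigma) (s : Sigma)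
  : A -> A -> L := fun x y => @delta L Sigma A x s y.

(** The formula sets F^n_<->, as an inductive family indexed by the depth n *)
Inductive formula (L : CRL) (Sigma : Type) : nat -> Type :=
| Ftau : forall n, formula L Sigma n
| Fdia : forall n, Sigma -> formula L Sigma n -> formula L Sigma (S n)
| Fbiimp : forall n, car L -> formula L Sigma n -> formula L Sigma n
| Fand : forall n, formula L Sigma n -> formula L Sigma n -> formula L Sigma n.

Fixpoint eval (L : CRL) (Sigma : Type) (A : fuzzy_automaton L Sigma) (n : nat)
  (f : formula L Sigma n) : A -> L :=
  match f with
  | @Ftau _ _ _ => @tau_out L Sigma A
  | @Fdia _ _ _ s g => set_comp (@delta_s L Sigma A s) (@eval L Sigma A _ g)
  | @Fbiimp _ _ _ a g => fun x => biimp a (@eval L Sigma A _ g x)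
  | @Fand _ _ _ g h => fun x => meet (@eval L Sigma A _ g x) (@eval L Sigma A _ h x)
  end.

Definition depth_bounded_bisim (L : CRL) (Sigma : Type)
  (A A' : fuzzy_automaton L Sigma) (phi : nat -> A -> A' -> L) : Prop :=
  (forall n, rel_le (phi (S n)) (phi n)) /\
  set_le (set_comp (rel_inv (phi 0)) (@tau_out L Sigma A)) (@tau_out L Sigma A') /\
  set_le (set_comp (phi 0) (@tau_out L Sigma A')) (@tau_out L Sigma A) /\
  (forall (s : Sigma) (n : nat),
     rel_le (rel_comp (rel_inv (phi (S n))) (@delta_s L Sigma A s))
            (rel_comp (@delta_s L Sigma A' s) (rel_inv (phi n))) /\
     rel_le (rel_comp (phi (S n)) (@delta_s L Sigma A' s))
            (rel_comp (@delta_s L Sigma A s) (phi n))).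

(* Main.v *)
Require Import Defs.

Section H.
Variable L : CRL.
Notation le := (@le L).
Notation mul := (@mul L).
Notation res := (@res L).

Lemma mono_l (x y z : L) : le x y -> le (mul x z) (mul y z).
Proof. intro h. apply adjunction. eapply le_trans. exact h. apply adjunction. apply le_refl. Qed.
Lemma mono_r (x y z : L) : le x y -> le (mul z x) (mul z y).
Proof. intro h. rewrite (mulC z x), (mulC z y). now apply mono_l. Qed.
Lemma mono2 (x y u v : L) : le x y -> le u v -> le (mul x u) (mul y v).
Proof. intros. eapply le_trans. apply mono_l; eauto. apply mono_r; eauto. Qed.
Lemma mres (y z : L) : le (mul (res y z) y) z.
Proof. apply adjunction. apply le_refl. Qed.
Lemma mres' (y z : L) : le (mul y (res y z)) z.
Proof. rewrite mulC. apply mres. Qed.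
Lemma mul_sup_le (a b : L) (S : L -> Prop) :
  (forall s, S s -> le (mul a s) b) -> le (mul a (@sup L S)) b.
Proof. intro h. rewrite mulC. apply adjunction. apply sup_least. intros s hs.
  apply adjunction. rewrite mulC. auto. Qed.
Lemma inf_lb (S : L -> Prop) x : S x -> le (inf S) x.
Proof. intro h. apply sup_least. intros y hy. auto. Qed.
Lemma inf_glb (S : L -> Prop) y : (forall x, S x -> le y x) -> le y (inf S).
Proof. intro h. unfold inf. apply (@sup_ub L (fun y0 : L => forall x, S x -> le y0 x)). exact h. Qed.
Lemma meet_lb1 (x y : L) : le (meet x y) x.
Proof. apply inf_lb. auto. Qed.
Lemma meet_lb2 (x y : L) : le (meet x y) y.
Proof. apply inf_lb. auto. Qed.
Lemma meet_glb (x y z : L) : le z x -> le z y -> le z (meet x y).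
Proof. intros. apply inf_glb. intros w [->| ->]; auto. Qed.
End H.

Theorem mainTheorem16 (L : CRL) (Sigma : Type) (A A' : fuzzy_automaton L Sigma)
  (phi : nat -> A -> A' -> L) :
  @depth_bounded_bisim L Sigma A A' phi ->
  forall n : nat,
    (forall alpha : formula L Sigma n,
       set_le (set_comp (rel_inv (phi n)) (@eval L Sigma A n alpha)) (@eval L Sigma A' n alpha) /\
       set_le (set_comp (phi n) (@eval L Sigma A' n alpha)) (@eval L Sigma A n alpha)) /\
    (forall (x : A) (x' : A'),
       @le L (phi n x x')
         (inf (fun v => exists alpha : formula L Sigma n,
                 v = biimp (@eval L Sigma A n alpha x) (@eval L Sigma A' n alpha x')))).
Proof.
  intros [Hmon [Ht1 [Ht2 Hd]]].
  assert (H0 : forall n x x', le (phi n x x') (phi 0 x x')).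
  { induction n; intros. apply le_refl. eapply le_trans. apply Hmon. auto. }
  assert (key : forall n (alpha : formula L Sigma n) x x',
    le (mul (phi n x x') (@eval L Sigma A n alpha x)) (@eval L Sigma A' n alpha x') /\
    le (mul (phi n x x') (@eval L Sigma A' n alpha x')) (@eval L Sigma A n alpha x)).
  { intros n alpha. induction alpha; intros x x'; simpl.
    - split.
      + eapply le_trans; [|apply (Ht1 x')]. eapply le_trans. apply mono_l, H0.
        apply (@sup_ub L (fun v : L => exists y, v = mul (rel_inv (phi 0) x' y) (@tau_out L Sigma A y))).
        exists x. reflexivity.
      + eapply le_trans; [|apply (Ht2 x)]. eapply le_trans. apply mono_l, H0.
        apply (@sup_ub L (fun v : L => exists y, v = mul (phi 0 x y) (@tau_out L Sigma A' y))).
        exists x'. reflexivity.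
    - destruct (Hd s n) as [D1 D2]. split.
      + apply mul_sup_le. intros v [y ->]. rewrite mulA.
        eapply le_trans. apply mono_l.
        eapply le_trans; [|apply (D1 x' y)].
        apply (@sup_ub L (fun v : L => exists z, v = mul (rel_inv (phi (S n)) x' z) (@delta_s L Sigma A s z y))).
        exists x. reflexivity.
        rewrite mulC. apply mul_sup_le. intros w [y' ->].
        rewrite mulC, <- mulA.
        eapply le_trans. apply mono_r. apply (proj1 (IHalpha y y')).
        apply (@sup_ub L (fun v : L => exists y0, v = mul (@delta_s L Sigma A' s x' y0) (@eval L Sigma A' n alpha y0))).
        exists y'. reflexivity.
      + apply mul_sup_le. intros v [y' ->]. rewrite mulA.
        eapply le_trans. apply mono_l.
        eapply le_trans; [|apply (D2 x y')].
        apply (@sup_ub L (fun v : L => exists z, v = mul (phi (S n) x z) (@delta_s L Sigma A' s z y'))).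
        exists x'. reflexivity.
        rewrite mulC. apply mul_sup_le. intros w [y ->].
        rewrite mulC, <- mulA.
        eapply le_trans. apply mono_r. apply (proj2 (IHalpha y y')).
        apply (@sup_ub L (fun v : L => exists y0, v = mul (@delta_s L Sigma A s x y0) (@eval L Sigma A n alpha y0))).
        exists y. reflexivity.
    - destruct (IHalpha x x') as [I1 I2]. unfold biimp.
      assert (E : forall p q r : L, mul (mul p q) r = mul q (mul p r)).
      { intros p q r. rewrite (mulC p q), <- mulA. reflexivity. }
      split; apply meet_glb; apply (proj1 (adjunction _ _ _)).
      + rewrite <- mulA. eapply le_trans. apply mono_r. eapply le_trans. apply mono_l. apply meet_lb1. apply mres. exact I1.
      + rewrite E. eapply le_trans. apply mono2. apply meet_lb2. exact I2. apply mres.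
      + rewrite <- mulA. eapply le_trans. apply mono_r. eapply le_trans. apply mono_l. apply meet_lb1. apply mres. exact I2.
      + rewrite E. eapply le_trans. apply mono2. apply meet_lb2. exact I1. apply mres.
    - destruct (IHalpha1 x x') as [I1 I2]. destruct (IHalpha2 x x') as [J1 J2].
      split; apply meet_glb.
      + eapply le_trans; [|exact I1]. apply mono_r, meet_lb1.
      + eapply le_trans; [|exact J1]. apply mono_r, meet_lb2.
      + eapply le_trans; [|exact I2]. apply mono_r, meet_lb1.
      + eapply le_trans; [|exact J2]. apply mono_r, meet_lb2. }
  intro n. split.
  - intro alpha. split; intro z; apply sup_least; intros v [y ->].
    + apply (key n alpha y z).
    + apply (key n alpha z y).
  - intros x x'. apply inf_glb. intros v [alpha ->]. unfold biimp.
    destruct (key n alpha x x') as [I1 I2]. apply meet_glb; apply adjunction; auto.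
Qed.
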